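(* For every $n\ge 2$ there is a bijection between the set of connected rooted chord diagrams with $n$ chords and the set of indecomposable rooted chord diagrams with $n$ chords having exactly two connected components. Consequently, if $I_2(x)$ denotes the ordinary generating function (by number of chords) of indecomposable chord diagrams with exactly two connected components, then $I_2(x)=C(x)-x$.
   Context: A (rooted) chord diagram with $n$ chords is a perfect matching of $\{1,\dots,2n\}$; its pairs $\{a<b\}$ are the chords. Two chords $\{a<b\},\{c<d\}$ cross if $a<c<b<d$ or $c<a<d<b$. The intersection graph has the chords as vertices and edges between crossing chords; its connected components are the connected components of the diagram, and a nonempty diagram is connected if its intersection graph is connected. A chord diagram with $n$ chords is indecomposable if there is no $k$ with $0<k<n$ such that $\{1,\dots,2k\}$ is a union of chords (the empty diagram is indecomposable by convention). $C(x)=\sum_n C_n x^n$ is the ordinary generating function of connected chord diagrams ($C_n$ = number with $n$ chords; $C(x)=x+x^2+4x^3+27x^4+\cdots$). *)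

(* Defs.v *)
From mathcomp Require Import all_boot all_order all_algebra.
Set Implicit Arguments. Unset Strict Implicit. Unset Printing Implicit Defensive.

(* A rooted chord diagram with n chords is a perfect matching of the 2n points;
   we encode it as a fixed-point-free involution on 'I_(n.*2)
   (points 0..2n-1, i.e. the points 1..2n shifted by one). *)
Definition pts (n : nat) := 'I_(n.*2).

Definition is_matching n (f : {ffun pts n -> pts n}) : bool :=
  [forall i, (f (f i) == i) && (f i != i)].

Definition chords n (f : {ffun pts n -> pts n}) : {set {set pts n}} :=
  [set [set i; f i] | i : pts n].

Definition cross n (A B : {set pts n}) : bool :=
  [exists a in A, exists b in A, exists c in B, exists d in B,
      [&& (a < c)%N, (c < b)%N & (b < d)%N]]
  || [exists a in A, exists b in A, exists c in B, exists d in B,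
      [&& (c < a)%N, (a < d)%N & (d < b)%N]].

Definition igraph n (f : {ffun pts n -> pts n}) : rel {set pts n} :=
  fun A B => [&& A \in chords f, B \in chords f & cross A B].

Definition ncomp n (f : {ffun pts n -> pts n}) : nat :=
  n_comp (igraph f) (mem (chords f)).

Definition connected_diag n (f : {ffun pts n -> pts n}) : bool :=
  ncomp f == 1%N.

Definition indecomposable n (f : {ffun pts n -> pts n}) : bool :=
  [forall k : 'I_n, (0 < k)%N ==>
     ~~ [forall i : pts n, (i < k.*2)%N ==> (f i < k.*2)%N]].

Definition conn_diag_pred n (f : {ffun pts n -> pts n}) : bool :=
  is_matching f && connected_diag f.

Definition indec2_pred n (f : {ffun pts n -> pts n}) : bool :=
  [&& is_matching f, indecomposable f & ncomp f == 2%N].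

Definition C_coef (n : nat) : nat := #|[set f | conn_diag_pred (n:=n) f]|.
Definition I2_coef (n : nat) : nat := #|[set f | indec2_pred (n:=n) f]|.

(* Main.v *)
Require Import Defs.
From mathcomp Require Import all_boot all_order all_algebra.
From mathcomp Require Import zify.
Set Implicit Arguments. Unset Strict Implicit. Unset Printing Implicit Defensive.

Lemma conn_hom (T T' : finType) (e : rel T) (e' : rel T') (h : T -> T') :
  (forall x y, e x y -> connect e' (h x) (h y)) ->
  forall x y, connect e x y -> connect e' (h x) (h y).
Proof.
move=> H x y /connectP[p]; elim: p x => [|z p IH] x /=.
  by move=> _ ->; exact: connect0.
by case/andP=> exz pz lz; apply: connect_trans (H _ _ exz) (IH _ pz lz).
Qed.

Section Basics.
Variable n : nat.
Implicit Types (f : {ffun pts n -> pts n}) (i j : pts n).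

Definition lo f i : nat := minn i (f i).
Definition hi f i : nat := maxn i (f i).
Definition pcross f i j :=
  [&& lo f i < lo f j, lo f j < hi f i & hi f i < hi f j] ||
  [&& lo f j < lo f i, lo f i < hi f j & hi f j < hi f i].

Lemma ex_lo f i : exists2 a : pts n, a \in [set i; f i] & (a:nat) = lo f i.
Proof.
rewrite /lo; case: (leqP i (f i)) => h.
  by exists i; [rewrite !inE eqxx | lia].
by exists (f i); [rewrite !inE eqxx orbT | lia].
Qed.

Lemma ex_hi f i : exists2 a : pts n, a \in [set i; f i] & (a:nat) = hi f i.
Proof.
rewrite /hi; case: (leqP i (f i)) => h.
  by exists (f i); [rewrite !inE eqxx orbT | lia].
by exists i; [rewrite !inE eqxx | lia].
Qed.

Lemma cross_ch f i j : cross [set i; f i] [set j; f j] = pcross f i j.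
Proof.
rewrite /cross /pcross; congr orb; apply/idP/idP.
- case/existsP=> a /andP[Ha /existsP[b /andP[Hb /existsP[c /andP[Hc /existsP[d /andP[Hd H]]]]]]].
  move: Ha Hb Hc Hd H; rewrite /lo /hi !inE.
  by move=> /orP[]/eqP-> /orP[]/eqP-> /orP[]/eqP-> /orP[]/eqP->; lia.
- move=> H; have [a Ha Ea] := ex_lo f i; have [b Hb Eb] := ex_hi f i.
  have [c Hc Ec] := ex_lo f j; have [d Hd Ed] := ex_hi f j.
  apply/existsP; exists a; rewrite Ha /=; apply/existsP; exists b; rewrite Hb /=.
  apply/existsP; exists c; rewrite Hc /=; apply/existsP; exists d; rewrite Hd /=.
  by rewrite Ea Eb Ec Ed.
- case/existsP=> a /andP[Ha /existsP[b /andP[Hb /existsP[c /andP[Hc /existsP[d /andP[Hd H]]]]]]].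
  move: Ha Hb Hc Hd H; rewrite /lo /hi !inE.
  by move=> /orP[]/eqP-> /orP[]/eqP-> /orP[]/eqP-> /orP[]/eqP->; lia.
- move=> H; have [a Ha Ea] := ex_hi f i; have [b Hb Eb] := ex_lo f i.
  have [c Hc Ec] := ex_lo f j; have [d Hd Ed] := ex_hi f j.
  apply/existsP; exists b; rewrite Hb /=; apply/existsP; exists a; rewrite Ha /=.
  apply/existsP; exists c; rewrite Hc /=; apply/existsP; exists d; rewrite Hd /=.
  by rewrite Ea Eb Ec Ed.
Qed.


Definition prel f : rel (pts n) := fun i j => pcross f i j || (f i == j).

Lemma mfK f : is_matching f -> forall i, f (f i) = i.
Proof. by move=> /forallP m i; case/andP: (m i) => /eqP. Qed.

Lemma mfN f : is_matching f -> forall i, f i != i.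
Proof. by move=> /forallP m i; case/andP: (m i). Qed.

Lemma pcrossC f i j : pcross f i j = pcross f j i.
Proof. by rewrite /pcross orbC. Qed.

Lemma prel_sym f : is_matching f -> symmetric (prel f).
Proof.
move=> m i j; rewrite /prel pcrossC; congr orb.
apply/eqP/eqP=> <-; by rewrite mfK.
Qed.

Lemma rep_ch f : is_matching f -> forall i x, x \in [set i; f i] ->
  [set x; f x] = [set i; f i].
Proof.
move=> m i x; rewrite !inE => /orP[]/eqP->; first by [].
by rewrite mfK // setUC.
Qed.

Lemma chords_ch f X : X \in chords f -> exists i, X = [set i; f i].
Proof. by case/imsetP=> i _ ->; exists i. Qed.

Lemma ch_chords f i : [set i; f i] \in chords f.
Proof. by apply/imsetP; exists i. Qed.

Lemma conn_ch f : is_matching f -> forall i j,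
  connect (igraph f) [set i; f i] [set j; f j] = connect (prel f) i j.
Proof.
move=> m i j; apply/idP/idP; last first.
  apply: (conn_hom (h := fun i => [set i; f i])) => x y /orP[H|/eqP<-].
    by apply: connect1; rewrite /igraph !ch_chords cross_ch.
  by rewrite mfK // setUC connect0.
pose rep (X : {set pts n}) := odflt i [pick x in X].
have repP X : X \in chords f -> X = [set rep X; f (rep X)].
  case/chords_ch=> k ->; rewrite /rep; case: pickP => [x Hx|H] /=.
    by rewrite (rep_ch m Hx).
  by move: (H k); rewrite !inE eqxx.
have repin k : rep [set k; f k] \in [set k; f k].
  rewrite /rep; case: pickP => [x Hx|H] //=.
  by move: (H k); rewrite !inE eqxx.
move=> H.
have H2 : connect (prel f) (rep [set i; f i]) (rep [set j; f j]).
  move: H; apply: conn_hom => X Y /and3P[HX HY HC].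
  apply: connect1; rewrite /prel; apply/orP; left.
  by rewrite -cross_ch -(repP _ HX) -(repP _ HY).
have Ei : connect (prel f) i (rep [set i; f i]).
  move: (repin i); rewrite !inE => /orP[]/eqP->; first exact: connect0.
  by apply: connect1; rewrite /prel eqxx orbT.
have Ej : connect (prel f) (rep [set j; f j]) j.
  move: (repin j); rewrite !inE => /orP[]/eqP->; first exact: connect0.
  by apply: connect1; rewrite /prel mfK // eqxx orbT.
exact: connect_trans (connect_trans Ei H2) Ej.
Qed.

Lemma igraph_sym f : is_matching f -> symmetric (igraph f).
Proof.
move=> m X Y; rewrite /igraph.
case HX: (X \in chords f); case HY: (Y \in chords f) => //=.
case/chords_ch: HX => i ->; case/chords_ch: HY => j ->.
by rewrite !cross_ch pcrossC.
Qed.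

Lemma conn_chords f X Y : connect (igraph f) X Y -> X \in chords f -> Y \in chords f.
Proof.
case/connectP=> p; elim: p X => [|z p IH] X /=; first by move=> _ ->.
by case/andP=> /and3P[_ Hz _] pz lz _; apply: IH pz lz Hz.
Qed.

Definition rootset f := [set X | (fingraph.root (igraph f) X == X) && (X \in chords f)].

Lemma ncompE f : ncomp f = #|rootset f|.
Proof. by rewrite /ncomp /rootset cardsE. Qed.

Lemma root_ch f : is_matching f -> forall i,
  exists j, fingraph.root (igraph f) [set i; f i] = [set j; f j] /\ connect (prel f) i j.
Proof.
move=> m i; have H := connect_root (igraph f) [set i; f i].
have := conn_chords H (ch_chords f i); case/chords_ch=> j Ej.
exists j; split => //; by rewrite -conn_ch // -Ej.
Qed.

Lemma in_rootset f : is_matching f -> forall i,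
  fingraph.root (igraph f) [set i; f i] \in rootset f.
Proof.
move=> m i; have [j [Ej _]] := root_ch m i.
by rewrite inE (fingraph.root_root (sym_connect_sym (igraph_sym m))) eqxx /= Ej ch_chords.
Qed.

Lemma root_eq f : is_matching f -> forall i j,
  (fingraph.root (igraph f) [set i; f i] == fingraph.root (igraph f) [set j; f j]) = connect (prel f) i j.
Proof.
move=> m i j; rewrite root_connect ?conn_ch //.
exact: sym_connect_sym (igraph_sym m).
Qed.

Lemma rootset_ch f : is_matching f -> forall X, X \in rootset f ->
  exists i, X = fingraph.root (igraph f) [set i; f i].
Proof.
move=> m X; rewrite inE => /andP[/eqP HX Hc]; case/chords_ch: Hc HX => i -> HX.
by exists i.
Qed.

Lemma ncomp1P f (i0 : pts n) : is_matching f ->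
  (ncomp f == 1) = [forall x, forall y, connect (prel f) x y].
Proof.
move=> m; rewrite ncompE; apply/cards1P/forallP.
  case=> r Hr x; apply/forallP=> y; rewrite -root_eq //.
  have := in_rootset m x; have := in_rootset m y; rewrite Hr !inE.
  by move=> /eqP-> /eqP->.
move=> H; exists (fingraph.root (igraph f) [set i0; f i0]); apply/setP=> X.
rewrite inE; apply/idP/idP.
  case/(rootset_ch m)=> i ->; rewrite root_eq //.
  by move/forallP: (H i).
by move/eqP->; apply: in_rootset.
Qed.

Lemma ncomp2P f : is_matching f ->
  reflect (exists x y, ~~ connect (prel f) x y /\
           forall z, connect (prel f) z x \/ connect (prel f) z y)
          (ncomp f == 2).
Proof.
move=> m; rewrite ncompE; apply: (iffP (cards2P _)).
  case=> X [Y [nXY E]].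
  have : X \in rootset f by rewrite E !inE eqxx.
  case/(rootset_ch m)=> x EX.
  have : Y \in rootset f by rewrite E !inE eqxx orbT.
  case/(rootset_ch m)=> y EY.
  exists x, y; split; first by rewrite -root_eq // -EX -EY.
  move=> z; have := in_rootset m z; rewrite E !inE -!root_eq // -EX -EY.
  by case/orP=> ->; [left|right].
case=> x [y [nxy H]].
exists (fingraph.root (igraph f) [set x; f x]), (fingraph.root (igraph f) [set y; f y]).
split; first by rewrite root_eq.
apply/setP=> X; rewrite in_set2; apply/idP/idP.
  case/(rootset_ch m)=> z ->; rewrite !root_eq //.
  by case: (H z) => ->; rewrite ?orbT.
by case/orP=> /eqP->; apply: in_rootset.
Qed.

End Basics.

Definition monoP (P : nat -> bool) (H : nat -> nat) :=
  forall a b, P a -> P b -> (H a < H b) = (a < b).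

Lemma minn_mono P H a b : monoP P H -> P a -> P b ->
  minn (H a) (H b) = H (minn a b) /\ maxn (H a) (H b) = H (maxn a b).
Proof.
move=> Hm Pa Pb; case: (leqP a b) => h.
  have E : H a <= H b by rewrite leqNgt Hm // -leqNgt.
  by rewrite (minn_idPl E) (maxn_idPr E).
have E : H b < H a by rewrite Hm.
by rewrite (minn_idPr (ltnW E)) (maxn_idPl (ltnW E)).
Qed.

Lemma P_minn (P : nat -> bool) a b : P a -> P b -> P (minn a b) && P (maxn a b).
Proof. by move=> Pa Pb; case: (leqP a b) => h; rewrite ?(minn_idPl h) ?(maxn_idPr h) ?(minn_idPr (ltnW h)) ?(maxn_idPl (ltnW h)) ?Pa ?Pb. Qed.

Section Transfer.
Variable n : nat.
Implicit Types (f g : {ffun pts n -> pts n}).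

Lemma pcross_transfer f g (h : pts n -> pts n) (H : nat -> nat) P :
  (forall p : pts n, (h p : nat) = H (p : nat)) -> monoP P H -> (forall x, g (h x) = h (f x)) ->
  forall x y : pts n, P x -> P (f x) -> P y -> P (f y) ->
  pcross g (h x) (h y) = pcross f x y.
Proof.
move=> hH Hm gh x y Px Pfx Py Pfy.
rewrite /pcross /lo /hi !gh !hH.
have [E1 E2] := minn_mono Hm Px Pfx; have [E3 E4] := minn_mono Hm Py Pfy.
rewrite E1 E2 E3 E4.
case/andP: (P_minn Px Pfx) => P1 P2; case/andP: (P_minn Py Pfy) => P3 P4.
by rewrite !Hm.
Qed.

Lemma prel_transfer f g (h : pts n -> pts n) (H : nat -> nat) P :
  injective h ->
  (forall p : pts n, (h p : nat) = H (p : nat)) -> monoP P H -> (forall x, g (h x) = h (f x)) ->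
  forall x y : pts n, P x -> P (f x) -> P y -> P (f y) ->
  prel g (h x) (h y) = prel f x y.
Proof.
move=> hi hH Hm gh x y Px Pfx Py Pfy.
by rewrite /prel (pcross_transfer hH Hm gh) // gh (inj_eq hi).
Qed.

End Transfer.

Section Split.
Variable n : nat.
Variable f : {ffun pts n -> pts n}.
Hypothesis m : is_matching f.

Lemma csym : connect_sym (prel f).
Proof. exact: sym_connect_sym (prel_sym m). Qed.

Lemma cross_inout (u v : nat) i j : pcross f i j ->
  u < i < v -> u < f i < v -> ~~ (u < j < v) -> ~~ (u < f j < v) -> False.
Proof.
rewrite /pcross /lo /hi => /orP[/and3P[]|/and3P[]]; lia.
Qed.

Lemma split_path (u v : nat) x y : connect (prel f) x y ->
  u < x < v -> ~~ (u < y < v) ->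
  exists z, [/\ connect (prel f) x z, u < z < v & ~~ (u < f z < v)].
Proof.
case/connectP=> p; elim: p x => [|w p IH] x /=.
  by move=> _ -> ->.
case/andP=> exw pw lw xin yout.
case win: (u < w < v).
  have [z [cwz zin fzout]] := IH w pw lw win yout.
  by exists z; split => //; apply: connect_trans (connect1 exw) cwz.
case fxin: (u < f x < v); last by exists x; rewrite connect0 xin fxin.
case/orP: exw => [cr|/eqP E]; last by rewrite -E fxin in win.
case fwin: (u < f w < v).
  exists (f w); split => //; last by rewrite mfK // win.
  by apply: (connect_trans (y := w)); apply: connect1; rewrite /prel ?cr ?eqxx ?orbT.
by case: (cross_inout cr xin fxin (negbT win) (negbT fwin)).
Qed.

Lemma split_path2 (u v : nat) x y : connect (prel f) x y ->
  ~~ (u < x < v) -> u < y < v ->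
  exists z, [/\ connect (prel f) x z, u < z < v & ~~ (u < f z < v)].
Proof.
move=> cxy xout yin; rewrite csym in cxy.
have [z [cyz H1 H2]] := split_path cxy yin xout.
by exists z; split => //; apply: connect_trans _ cyz; rewrite csym.
Qed.

End Split.

Section Generic.
Variable T : finType.

Lemma conn_closed (e : rel T) (Q : pred T) :
  (forall x y, e x y -> Q x -> Q y) -> forall x y, Q x -> connect e x y -> Q y.
Proof.
move=> H x y Qx /connectP[p]; elim: p x Qx => [|w p IH] x Qx /=; first by move=> _ ->.
by case/andP=> exw pw lw; apply: (IH w (H _ _ exw Qx) pw lw).
Qed.

Lemma conn_hom_in (T' : finType) (e : rel T) (e' : rel T') (h : T -> T') (Q : pred T) :
  (forall x y, e x y -> Q x -> Q y) ->
  (forall x y, Q x -> e x y -> connect e' (h x) (h y)) ->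
  forall x y, Q x -> connect e x y -> connect e' (h x) (h y).
Proof.
move=> Hc H x y Qx /connectP[p]; elim: p x Qx => [|w p IH] x Qx /=.
  by move=> _ ->; exact: connect0.
case/andP=> exw pw lw; apply: connect_trans (H _ _ Qx exw) _.
exact: (IH w (Hc _ _ exw Qx) pw lw).
Qed.

Lemma conn_exit (e : rel T) (Q : pred T) x y : Q x -> ~~ Q y -> connect e x y ->
  exists u w, [/\ Q u, ~~ Q w & e u w].
Proof.
move=> Qx nQy /connectP[p]; elim: p x Qx => [|w p IH] x Qx /=.
  by move=> _ E; rewrite E Qx in nQy.
case/andP=> exw pw lw; case Qw: (Q w).
  exact: (IH w Qw pw lw).
by exists x, w; rewrite Qx Qw exw.
Qed.

Lemma conn_reach (e : rel T) (R S : pred T) (P : T -> Prop) :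
  (forall x, R x -> ~~ S x) ->
  (forall x w, R x -> e x w -> S w -> P x) ->
  (forall x w, R x -> e x w -> ~~ S w -> R w /\ (P w -> P x)) ->
  forall x y, R x -> connect e x y -> S y -> P x.
Proof.
move=> H0 H1 H2 x y Rx /connectP[p]; elim: p x Rx => [|w p IH] x Rx /=.
  by move=> _ -> Sy; move: (H0 _ Rx); rewrite Sy.
case/andP=> exw pw lw Sy; case Sw: (S w).
  exact: (H1 x w Rx exw Sw).
have [Rw HP] := H2 x w Rx exw (negbT Sw).
by apply: HP; apply: (IH w Rw pw lw Sy).
Qed.

End Generic.

Lemma max_attain (N : nat) (P : pred 'I_N) (i0 : 'I_N) : P i0 ->
  exists2 i, P i & \max_(j | P j) (j : nat) = i.
Proof.
move=> Pi0; rewrite (bigmax_eq_arg i0) //.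
by case: arg_maxnP => // i Pi _; exists i.
Qed.

Definition mvn (N q p : nat) := if p < q then p else if p == q then N.-1 else p.-1.
Definition insn (N q p : nat) := if p < q then p else if p == N.-1 then q else p.+1.

Lemma mvn_lt N q p : q < N -> p < N -> mvn N q p < N.
Proof. rewrite /mvn; repeat case: ifP; lia. Qed.
Lemma insn_lt N q p : q < N -> p < N -> insn N q p < N.
Proof. rewrite /insn; repeat case: ifP; lia. Qed.
Lemma mvnK N q p : q < N -> p < N -> insn N q (mvn N q p) = p.
Proof. rewrite /mvn /insn; repeat case: ifP; lia. Qed.
Lemma insnK N q p : q < N -> p < N -> mvn N q (insn N q p) = p.
Proof. rewrite /mvn /insn; repeat case: ifP; lia. Qed.
Lemma mvn_mono N q : monoP (fun p => p != q) (mvn N q).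
Proof. move=> a b; rewrite /mvn; repeat case: ifP; lia. Qed.
Lemma insn_mono N q : q < N -> monoP (fun p => p != N.-1) (insn N q).
Proof. move=> qN a b; rewrite /insn; repeat case: ifP; lia. Qed.

Section Move.
Variable n : nat.
Local Notation N := (n.*2).
Implicit Types (f g : {ffun pts n -> pts n}) (q p : pts n).

Definition mv q p : pts n := insubd p (mvn N q p).
Definition ins q p : pts n := insubd p (insn N q p).

Lemma mvE q p : (mv q p : nat) = mvn N q p.
Proof. by rewrite /mv val_insubd mvn_lt. Qed.
Lemma insE q p : (ins q p : nat) = insn N q p.
Proof. by rewrite /ins val_insubd insn_lt. Qed.
Lemma mvK q : cancel (mv q) (ins q).
Proof. by move=> p; apply: ord_inj; rewrite insE mvE mvnK. Qed.
Lemma insK q : cancel (ins q) (mv q).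
Proof. by move=> p; apply: ord_inj; rewrite mvE insE insnK. Qed.

Definition conjf (h h' : pts n -> pts n) f : {ffun pts n -> pts n} :=
  [ffun p => h (f (h' p))].

Lemma conjE h h' f x : cancel h h' -> conjf h h' f (h x) = h (f x).
Proof. by move=> K; rewrite /conjf ffunE K. Qed.

Lemma conj_matching h h' f : cancel h h' -> cancel h' h ->
  is_matching f -> is_matching (conjf h h' f).
Proof.
move=> K1 K2 m; apply/forallP=> p; rewrite -(K2 p) !conjE //.
by rewrite mfK // eqxx /= (inj_eq (can_inj K1)) mfN.
Qed.

Lemma conjK h h' f : cancel h h' -> cancel h' h -> conjf h' h (conjf h h' f) = f.
Proof. by move=> K1 K2; apply/ffunP=> p; rewrite /conjf !ffunE !K1. Qed.

End Move.

Section More.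
Variable n : nat.
Local Notation N := (n.*2).
Variable f : {ffun pts n -> pts n}.
Hypothesis m : is_matching f.

Lemma split_path_e (e : rel (pts n)) (u v : nat) x y :
  (forall a b, e a b -> prel f a b) -> (forall a b, e a b -> e b (f b)) ->
  connect e x y -> u < x < v -> ~~ (u < y < v) ->
  exists z, [/\ connect e x z, u < z < v & ~~ (u < f z < v)].
Proof.
move=> Hsub Hf /connectP[p]; elim: p x => [|w p IH] x /=.
  by move=> _ -> ->.
case/andP=> exw pw lw xin yout.
case win: (u < w < v).
  have [z [cwz zin fzout]] := IH w pw lw win yout.
  by exists z; split => //; apply: connect_trans (connect1 exw) cwz.
case fxin: (u < f x < v); last by exists x; rewrite connect0 xin fxin.
case/orP: (Hsub _ _ exw) => [cr|/eqP E]; last by rewrite -E fxin in win.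
case fwin: (u < f w < v).
  exists (f w); split => //; last by rewrite mfK // win.
  by apply: (connect_trans (connect1 exw)); apply: connect1; apply: Hf exw.
by case: (cross_inout m cr xin fxin (negbT win) (negbT fwin)).
Qed.

Lemma split_path2_e (e : rel (pts n)) (u v : nat) x y :
  (forall a b, e a b -> prel f a b) -> (forall a b, e a b -> e b (f b)) ->
  connect_sym e ->
  connect e x y -> ~~ (u < x < v) -> u < y < v ->
  exists z, [/\ connect e x z, u < z < v & ~~ (u < f z < v)].
Proof.
move=> H1 H2 sy cxy xout yin; rewrite sy in cxy.
have [z [cyz Ha Hb]] := split_path_e H1 H2 cxy yin xout.
by exists z; split => //; apply: (connect_trans (y := y)) => //; rewrite sy.
Qed.

Lemma lo_f i : lo f (f i) = lo f i.
Proof. by rewrite /lo mfK // minnC. Qed.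
Lemma hi_f i : hi f (f i) = hi f i.
Proof. by rewrite /hi mfK // maxnC. Qed.
Lemma pcross_f i j : pcross f (f i) j = pcross f i j.
Proof. by rewrite /pcross lo_f hi_f. Qed.
Lemma pcross_f2 i j : pcross f i (f j) = pcross f i j.
Proof. by rewrite /pcross lo_f hi_f. Qed.

Lemma prel_f x : prel f x (f x).
Proof. by rewrite /prel eqxx orbT. Qed.

Lemma conn_f x y : connect (prel f) x y -> connect (prel f) x (f y).
Proof. by move=> H; apply: connect_trans H (connect1 (prel_f y)). Qed.

Lemma conn_fE x y : connect (prel f) x (f y) = connect (prel f) x y.
Proof. by apply/idP/idP => /conn_f //; rewrite mfK. Qed.

Lemma split_cross (i w : pts n) : lo f i < w < hi f i -> ~~ (lo f i < f w < hi f i) ->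
  f w != i -> f w != f i -> pcross f w i.
Proof.
rewrite /pcross /lo /hi => H1 H2 H3 H4.
have H5 : (f w : nat) != i by [].
have H6 : (f w : nat) != f i by [].
move: H5 H6 H1 H2; lia.
Qed.

Lemma prefix_even (t : nat) : t <= N -> (forall i : pts n, i < t -> f i < t) -> ~~ odd t.
Proof.
move=> tN Hc.
set S := [set i : pts n | i < t].
have cS : #|S| = t.
  have -> : S = [set widen_ord tN i | i : 'I_t].
    apply/setP=> i; rewrite !inE; apply/idP/imsetP.
      by move=> it; exists (Ordinal it) => //; apply: val_inj.
    by case=> j _ E; rewrite E /=; exact: ltn_ord.
  rewrite card_imset ?card_ord //.
  by move=> a b /(congr1 val) /= E; apply: val_inj.
set A := [set i in S | i < f i]; set B := [set i in S | f i < i].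
have SAB : S = A :|: B.
  apply/setP=> i; rewrite !inE; case: (i < t) => //=.
  have := mfN m i; rewrite -(inj_eq val_inj) /=; lia.
have AB0 : A :&: B = set0.
  by apply/setP=> i; rewrite !inE; lia.
have fAB : f @: A = B.
  apply/setP=> i; rewrite inE; apply/imsetP/idP.
    case=> j; rewrite !inE => /andP[jt jf] ->; rewrite mfK // jf andbT.
    by apply: Hc.
  rewrite inE => /andP[it fi]; exists (f i); last by rewrite mfK.
  by rewrite !inE mfK // fi andbT Hc.
have finj : injective f by apply: (can_inj (mfK m)).
move: cS; rewrite SAB cardsU AB0 cards0 subn0 -fAB card_imset // => <-.
by rewrite addnn odd_double.
Qed.

End More.

Lemma mvn_lt_q N q p : p < q -> mvn N q p = p.
Proof. by rewrite /mvn => ->. Qed.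
Lemma mvn_q N q : mvn N q q = N.-1.
Proof. by rewrite /mvn ltnn eqxx. Qed.
Lemma mvn_gt_q N q p : q < p -> mvn N q p = p.-1.
Proof. rewrite /mvn => h; rewrite ltnNge (ltnW h) /=; case: eqP => //; lia. Qed.
Lemma insn_lt_q N q p : p < q -> insn N q p = p.
Proof. by rewrite /insn => ->. Qed.
Lemma insn_L N q : q <= N.-1 -> insn N q N.-1 = q.
Proof. rewrite /insn => h; rewrite ltnNge h /= eqxx //. Qed.
Lemma insn_ge_q N q p : q <= p -> p != N.-1 -> insn N q p = p.+1.
Proof. rewrite /insn => h1 h2; rewrite ltnNge h1 /= (negbTE h2) //. Qed.

Lemma pcross_self n (f : {ffun pts n -> pts n}) x : pcross f x x = false.
Proof. rewrite /pcross; lia. Qed.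

Lemma pcross_selff n (f : {ffun pts n -> pts n}) x : is_matching f -> pcross f x (f x) = false.
Proof. by move=> m; rewrite pcross_f2 // pcross_self. Qed.

Definition qn n (f : {ffun pts n -> pts n}) (z : pts n) :=
  \max_(p : pts n | ~~ connect (prel f) z p) (p : nat).
Definition qpt n (f : {ffun pts n -> pts n}) (z : pts n) : pts n := insubd z (qn f z).
Definition Phi n (f : {ffun pts n -> pts n}) (z : pts n) :=
  conjf (mv (qpt f z)) (ins (qpt f z)) f.
Definition Lpt n (z : pts n) : pts n := insubd z (n.*2).-1.

Lemma LptE n (z : pts n) : (Lpt z : nat) = (n.*2).-1.
Proof. rewrite /Lpt val_insubd; have := ltn_ord z; case: ifP => //; lia. Qed.

Definition nc n (g : {ffun pts n -> pts n}) (z : pts n) (x : pts n) :=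
  (x != g (Lpt z)) && (x != Lpt z).
Definition prel' n (g : {ffun pts n -> pts n}) (z : pts n) : rel (pts n) :=
  fun x y => [&& prel g x y, nc g z x & nc g z y].
Definition en n (g : {ffun pts n -> pts n}) (z : pts n) :=
  \max_(p : pts n | ~~ connect (prel' g z) z p && (p != Lpt z)) (p : nat).
Definition qpt' n (g : {ffun pts n -> pts n}) (z : pts n) : pts n := insubd z (en g z).+1.
Definition Psi n (g : {ffun pts n -> pts n}) (z : pts n) :=
  conjf (ins (qpt' g z)) (mv (qpt' g z)) g.

Section Phi.
Variable n : nat.
Local Notation N := (n.*2).
Variable f : {ffun pts n -> pts n}.
Hypothesis m : is_matching f.
Variable z : pts n.
Hypothesis z0 : (z : nat) = 0.
Hypothesis ind : indecomposable f.
Hypothesis c2 : ncomp f == 2.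

Local Notation Ap := (connect (prel f) z).
Local Notation q := (qpt f z).
Local Notation L := (Lpt z).

Lemma Ap_trans x y : Ap x -> connect (prel f) x y -> Ap y.
Proof. by move=> H1 H2; apply: connect_trans H1 H2. Qed.

Lemma Bconn u v : ~~ Ap u -> ~~ Ap v -> connect (prel f) u v.
Proof.
have sy := csym m.
case/(ncomp2P m): c2 => x [y [nxy H]] hu hv.
case: (H z) => zc.
  have ux : ~~ connect (prel f) u x.
    by apply: contra hu => ux; rewrite sy in ux; apply: connect_trans zc ux.
  have vx : ~~ connect (prel f) v x.
    by apply: contra hv => vx; rewrite sy in vx; apply: connect_trans zc vx.
  case: (H u) => uy; first by rewrite uy in ux.
  case: (H v) => vy; first by rewrite vy in vx.
  by apply: connect_trans uy _; rewrite sy.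
have uy : ~~ connect (prel f) u y.
  by apply: contra hu => uy; rewrite sy in uy; apply: connect_trans zc uy.
have vy : ~~ connect (prel f) v y.
  by apply: contra hv => vy; rewrite sy in vy; apply: connect_trans zc vy.
case: (H u) => ux; last by rewrite ux in uy.
case: (H v) => vx; last by rewrite vx in vy.
by apply: connect_trans ux _; rewrite sy.
Qed.

Lemma Bex : exists p, ~~ Ap p.
Proof.
have sy := csym m.
case/(ncomp2P m): c2 => x [y [nxy H]].
case Ax: (Ap x); last by exists x; rewrite Ax.
case Ay: (Ap y); last by exists y; rewrite Ay.
have Ax2 : connect (prel f) x z by rewrite sy Ax.
by rewrite (connect_trans Ax2 Ay) in nxy.
Qed.

Lemma qP : ~~ Ap q /\ (forall p, ~~ Ap p -> p <= q).
Proof.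
have [p0 Hp0] := Bex.
have [i Pi Ei] := max_attain (P := fun p => ~~ Ap p) Hp0.
have qi : q = i by apply: val_inj; rewrite /= /qpt val_insubd /qn Ei ltn_ord.
rewrite qi; split => // p Hp.
by rewrite -Ei; apply: (leq_bigmax_cond (P := fun p => ~~ Ap p) (F := fun p : pts n => (p : nat))).
Qed.

Lemma L_A : Ap L.
Proof.
apply/negPn/negP => nL.
have [M AM EM] := max_attain (P := fun p => Ap p) (connect0 _ z).
have Mb : forall p, Ap p -> p <= M.
  by move=> p Hp; rewrite -EM; apply: (leq_bigmax_cond (P := fun p => Ap p) (F := fun p : pts n => (p : nat))).
have ML : M < N.-1.
  have := ltn_ord M; have : M != L by apply: contraNneq nL => <-.
  rewrite -(inj_eq val_inj) /= LptE; lia.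
have closed : forall i : pts n, i < M.+1 -> f i < M.+1.
  move=> i iM; rewrite ltnNge; apply/negP => fiM.
  case Ai: (Ap i).
    have := Mb _ (conn_f Ai); lia.
  have iM' : i != M by apply: contraFneq Ai => ->.
  have iM2 : i < M by move: iM' iM; rewrite -(inj_eq val_inj) /=; lia.
  have zout : ~~ (i < z < f i) by rewrite z0.
  have Min : i < M < f i by apply/andP; split => //; lia.
  have [w [czw win fwout]] := split_path2 m AM zout Min.
  have fwi : f w != i by apply/eqP => E; move: win; rewrite -E mfK //; lia.
  have fwfi : f w != f i by apply/eqP => /(can_inj (mfK m)) E; move: win; rewrite E; lia.
  have cr : pcross f w i.
    apply: split_cross => //; rewrite /lo /hi; move: win fwout; lia.
  move/negbT: Ai => /negP; apply; apply: connect_trans czw (connect1 _).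
  by rewrite /prel cr.
have MN : M.+1 <= N by lia.
have ev := prefix_even m MN closed.
have k2 : (M.+1)./2.*2 = M.+1 by rewrite -[RHS](odd_double_half (M.+1)) (negbTE ev).
have kn : (M.+1)./2 < n by lia.
move/forallP: ind => /(_ (Ordinal kn)) /implyP /=; rewrite k2.
case/(_ _)/negP; first by lia.
by apply/forallP => i; apply/implyP; apply: closed.
Qed.


Lemma b_lt_q : f q < q /\ ~~ Ap (f q).
Proof.
have [nq qb] := qP.
have nb : ~~ Ap (f q) by rewrite conn_fE.
split => //; have := qb _ nb; have := mfN m q; rewrite -(inj_eq val_inj) /=; lia.
Qed.

Lemma straddle : exists w, [/\ Ap w, q < w & f w < f q].
Proof.
have [nq qb] := qP; have [bq nb] := b_lt_q.
have Lq : q < L.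
  have := ltn_ord q; have : q != L by apply: contraNneq nq => ->; exact: L_A.
  rewrite -(inj_eq val_inj) /= LptE; lia.
have Lin : q < L < N by rewrite Lq /= LptE; have := ltn_ord q; lia.
have zout : ~~ (q < z < N) by rewrite z0.
have cLz : connect (prel f) L z by rewrite (csym m) L_A.
have [w [cLw win fwout]] := split_path m cLz Lin zout.
have Aw : Ap w by apply: connect_trans L_A cLw.
have Afw : Ap (f w) by rewrite conn_fE.
have fwq : f w < q.
  have : f w != q by apply: contraNneq nq => <-.
  rewrite -(inj_eq val_inj) /=; have := ltn_ord (f w); move: fwout; lia.
exists w; split => //; first by case/andP: win.
rewrite ltnNge; apply/negP => bfw.
have fwb : f w != f q by apply: contraNneq nb => <-.
have cr : pcross f q (f w).
  rewrite /pcross /lo /hi mfK //; move: fwb; rewrite -(inj_eq val_inj) /=.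
  move: bq bfw fwq win; lia.
move/negP: nq; apply; apply: connect_trans Afw (connect1 _).
by rewrite /prel pcrossC cr.
Qed.

Local Notation g := (Phi f z).
Local Notation h := (mv q).

Lemma gE x : g (h x) = h (f x).
Proof. by rewrite /Phi conjE //; apply: mvK. Qed.

Lemma g_matching : is_matching g.
Proof. by apply: conj_matching => //; [apply: mvK | apply: insK]. Qed.

Lemma transfer x y : x != q -> f x != q -> y != q -> f y != q ->
  prel g (h x) (h y) = prel f x y.
Proof.
move=> h1 h2 h3 h4.
apply: (prel_transfer (H := mvn N q) (P := fun p => p != (q : nat))) => //.
- exact: can_inj (mvK q).
- by move=> p; rewrite mvE.
- exact: mvn_mono.
- by move=> p; rewrite gE.
Qed.

Lemma keyc y : ~~ Ap y -> y != q -> f y != q -> pcross f q y -> pcross g (h q) (h y).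
Proof.
move=> ny yq fyq cr.
have [nq qb] := qP; have [bq nb] := b_lt_q.
have y1 : y < q.
  have := qb _ ny; move: yq; rewrite -(inj_eq val_inj) /=; lia.
have y2 : f y < q.
  have := qb _ (negbT (introF idP (fun H => negP ny (etrans (esym (conn_fE m z y)) H)))).
  move: fyq; rewrite -(inj_eq val_inj) /=; lia.
move: cr; rewrite /pcross /lo /hi !gE !mvE (mvn_lt_q _ y1) (mvn_lt_q _ y2) mvn_q (mvn_lt_q _ bq).
have := ltn_ord q; lia.
Qed.

Lemma Phi_conn : ncomp g == 1.
Proof.
have gm := g_matching.
have [nq qb] := qP; have [bq nb] := b_lt_q.
have sy := csym gm.
have partA : forall p, Ap p -> connect (prel g) (h z) (h p).
  move=> p Hp; apply: (@conn_hom_in _ _ (prel f) (prel g) h (fun p => Ap p) _ _ z p (connect0 _ z) Hp).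
    by move=> x y exy Ax; apply: connect_trans Ax (connect1 exy).
  move=> x y Ax exy; apply: connect1.
  have Ay : Ap y by apply: connect_trans Ax (connect1 exy).
  have ne : forall p, Ap p -> p != q by move=> p1 Hp1; apply: contraNneq nq => <-.
  rewrite transfer ?ne //; by rewrite conn_fE.
have partB : forall p, ~~ Ap p -> connect (prel g) (h p) (h q).
  move=> p0 np; apply: (@conn_hom_in _ _ (prel f) (prel g) h (fun p => ~~ Ap p) _ _ p0 q np (Bconn np nq)).
    move=> x y exy; apply: contra => Ay; apply: connect_trans Ay _.
    by rewrite (csym m); apply: connect1.
  move=> x y nx exy; apply: connect1.
  have ny : ~~ Ap y.
    apply: contra nx => Ay; apply: connect_trans Ay _.
    by rewrite (csym m); apply: connect1.
  case/orP: exy => [cr|/eqP E]; last by rewrite /prel gE E eqxx orbT.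
  case hx: ((x != q) && (f x != q)); case hy: ((y != q) && (f y != q)).
  - by move/andP: hx => [h1 h2]; move/andP: hy => [h3 h4]; rewrite transfer // /prel cr.
  - move/negbT: hy; rewrite negb_and !negbK => hy'.
    move/andP: hx => [h1 h2].
    have cr2 : pcross f q x.
      by case/orP: hy' => /eqP E; [rewrite -E pcrossC | rewrite -E pcross_f // pcrossC].
    have cr3 := keyc nx h1 h2 cr2.
    case/orP: hy' => /eqP E; first by rewrite /prel E pcrossC cr3.
    have -> : y = f q by rewrite -E mfK.
    by rewrite -gE /prel pcross_f2 // pcrossC cr3.
  - move/negbT: hx; rewrite negb_and !negbK => hx.
    move/andP: hy => [h3 h4].
    have cr2 : pcross f q y.
      by case/orP: hx => /eqP E; [rewrite -E | rewrite -E pcross_f].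
    have cr3 := keyc ny h3 h4 cr2.
    case/orP: hx => /eqP E; first by rewrite /prel E cr3.
    have -> : x = f q by rewrite -E mfK.
    by rewrite -gE /prel pcross_f // cr3.
  - move/negbT: hx; rewrite negb_and !negbK => hx.
    move/negbT: hy; rewrite negb_and !negbK => hy.
    have : (y == x) || (y == f x).
      case/orP: hx => /eqP Ex; case/orP: hy => /eqP Ey.
      + by rewrite Ex Ey eqxx.
      + by rewrite Ex -Ey mfK // eqxx orbT.
      + by rewrite Ey -Ex eqxx orbT.
      + have : f y = f x by rewrite Ex Ey.
        by move/(can_inj (mfK m)) ->; rewrite eqxx.
    by case/orP=> /eqP E; move: cr; rewrite E ?pcross_self ?pcross_selff.
have [w [Aw wq fwb]] := straddle.
have bridge : connect (prel g) (h w) (h q).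
  apply: connect1; rewrite /prel; apply/orP; left.
  rewrite /pcross /lo /hi !gE !mvE (mvn_gt_q _ wq) (mvn_lt_q _ (ltn_trans fwb bq)) mvn_q (mvn_lt_q _ bq).
  have := ltn_ord w; lia.
have hub : forall p, connect (prel g) (h z) (h p).
  move=> p; case Ap_p: (Ap p); first exact: partA.
  apply: connect_trans (partA _ Aw) _; apply: connect_trans bridge _.
  by rewrite sy; apply: partB; rewrite Ap_p.
rewrite (ncomp1P z gm); apply/forallP => x; apply/forallP => y.
rewrite -(insK q x) -(insK q y).
by apply: connect_trans (hub _); rewrite sy.
Qed.

Local Notation Ag := (connect (prel' g z) z).

Lemma hq : h q = L.
Proof. by apply: val_inj; rewrite /= mvE mvn_q LptE. Qed.

Lemma q_pos : 0 < q.
Proof. by have [bq _] := b_lt_q; lia. Qed.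

Lemma hz' : ins q z = z.
Proof. by apply: val_inj; rewrite /= insE insn_lt_q // z0 q_pos. Qed.

Lemma hz2 : h z = z.
Proof. by rewrite -[X in h X]hz' insK. Qed.

Lemma gL : g L = h (f q).
Proof. by rewrite -hq gE. Qed.

Lemma Ag_to_Ap p : Ag p -> Ap (ins q p).
Proof.
move=> H; have Qz : Ap (ins q z) by rewrite hz' connect0.
apply: (conn_closed (Q := fun p => Ap (ins q p)) _ Qz H).
move=> u v /and3P[euv ncu ncv] Au.
set x := ins q u in Au *; set y := ins q v.
have ux : u = h x by rewrite /x insK.
have vy : v = h y by rewrite /y insK.
rewrite ux vy in euv ncu ncv.
have gm := g_matching.
have neq : forall w, nc g z (h w) -> (w != q) && (f w != q).
  move=> w /andP[h1 h2]; apply/andP; split.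
    by apply: contraNneq h2 => ->; rewrite hq.
  apply: contraNneq h1 => E; rewrite gL.
  have -> : f q = w by rewrite -E mfK.
  by [].
case/andP: (neq _ ncu) => h1 h2; case/andP: (neq _ ncv) => h3 h4.
rewrite transfer // in euv.
by apply: (connect_trans Au); apply: connect1.
Qed.

Lemma Ap_to_Ag x : Ap x -> Ag (h x).
Proof.
move=> Ax; suff : connect (prel' g z) (h z) (h x) by rewrite hz2.
apply: (@conn_hom_in _ _ (prel f) (prel' g z) h (fun p => Ap p) _ _ z x (connect0 _ z) Ax).
  by move=> u v euv Au; apply: (connect_trans Au); apply: connect1.
move=> u v Au euv; apply: connect1.
have Av : Ap v by apply: (connect_trans Au); apply: connect1.
have [nq _] := qP; have [_ nb] := b_lt_q.
have ne : forall p, Ap p -> p != q by move=> p1 Hp1; apply: contraNneq nq => <-.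
have nc_h : forall p, Ap p -> nc g z (h p).
  move=> p Hp; rewrite /nc gL -hq !(inj_eq (can_inj (mvK q))) ne //.
  by rewrite andbT; apply: contraNneq nb => <-.
have Afu : Ap (f u) by rewrite (conn_fE m).
have Afv : Ap (f v) by rewrite (conn_fE m).
rewrite /prel' (nc_h _ Au) (nc_h _ Av) transfer ?andbT //; exact: ne.
Qed.

Definition qm : pts n := insubd z (q : nat).-1.
Lemma qmE : (qm : nat) = (q : nat).-1.
Proof. by rewrite /qm val_insubd; have := ltn_ord q; case: ifP => //; lia. Qed.

Lemma qm_nA : ~~ Ap qm.
Proof.
have [nq qb] := qP; have [bq nb] := b_lt_q.
case E: (qm == f q); first by rewrite (eqP E).
apply/negP => Aqm.
have qmi : f q < qm < q.
  by move: E; rewrite -(inj_eq val_inj) /= qmE; have := q_pos; lia.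
have zout : ~~ (f q < z < q) by rewrite z0.
have [w [czw win fwout]] := split_path2 m Aqm zout qmi.
have Aw : Ap w := czw.
have Afw : Ap (f w) by rewrite conn_fE.
have fwq : f w != q by apply: contraNneq nq => <-.
have fwb : f w != f q by apply: contraNneq nb => <-.
have cr : pcross f w q.
  apply: split_cross => //; rewrite /lo /hi; move: win fwout bq; lia.
by move/negP: nq; apply; apply: (connect_trans Aw); apply: connect1; rewrite /prel cr.
Qed.

Lemma en_Phi : en g z = (q : nat).-1.
Proof.
have [nq qb] := qP; have [bq nb] := b_lt_q.
apply/eqP; rewrite eqn_leq; apply/andP; split.
  apply/bigmax_leqP => p /andP[np pL].
  rewrite -[p](insK q); set x := ins q p.
  have nx : ~~ Ap x by apply: contra np => Ax; rewrite -[p](insK q) Ap_to_Ag.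
  have xq : x != q by apply: contraNneq pL => E; rewrite -[p](insK q) -/x E hq.
  have := qb _ nx; move: xq; rewrite -(inj_eq val_inj) /= => xq xle.
  by rewrite mvE mvn_lt_q; lia.
have hqm : h qm = qm by apply: val_inj; rewrite /= mvE mvn_lt_q qmE //; have := q_pos; lia.
rewrite -qmE -hqm /en.
apply: leq_bigmax_cond; apply/andP; split.
  by apply: contra qm_nA => H; have := Ag_to_Ap H; rewrite mvK.
rewrite -(inj_eq val_inj) /= hqm qmE LptE; have := ltn_ord q; have := q_pos; lia.
Qed.

Lemma Psi_Phi : Psi g z = f.
Proof.
rewrite /Psi; have -> : qpt' g z = q.
  by apply: val_inj; rewrite /= /qpt' val_insubd en_Phi prednK ?q_pos // ltn_ord.
by rewrite /Phi conjK //; [apply: mvK | apply: insK].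
Qed.

End Phi.

Section Psi.
Variable n : nat.
Local Notation N := (n.*2).
Variable g : {ffun pts n -> pts n}.
Hypothesis m : is_matching g.
Variable z : pts n.
Hypothesis z0 : (z : nat) = 0.
Hypothesis n2 : 2 <= n.
Hypothesis c1 : ncomp g == 1.

Local Notation L := (Lpt z).
Local Notation b := (g (Lpt z)).
Local Notation Ag := (connect (prel' g z) z).
Local Notation e := (en g z).
Local Notation q := (qpt' g z).

Lemma allc x y : connect (prel g) x y.
Proof. by move: c1; rewrite (ncomp1P z m) => /forallP/(_ x)/forallP/(_ y). Qed.

Lemma LE : (L : nat) = N.-1.
Proof. exact: LptE. Qed.

Lemma bL : b != L.
Proof. exact: mfN. Qed.

Lemma gK x : g (g x) = x.
Proof. exact: mfK. Qed.

Lemma ginj : injective g.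
Proof. exact: can_inj gK. Qed.

Lemma b0 : (b : nat) != 0.
Proof.
apply/negP => /eqP bz.
have oN : 1 < N by lia.
set one : pts n := Ordinal oN.
have zout : ~~ (0 < z < L) by rewrite z0.
have oin : 0 < one < L by rewrite LE /=; lia.
have [w [_ win gwout]] := split_path2 m (allc z one) zout oin.
have := ltn_ord (g w); rewrite LE in win gwout.
move=> gwN.
have : ((g w : nat) == 0) || ((g w : nat) == N.-1) by move: gwout gwN; lia.
case/orP=> /eqP E.
  have : g w = b by apply: val_inj; rewrite /= E bz.
  by move/ginj => E2; move: win; rewrite E2 LE; lia.
have : g w = L by apply: val_inj; rewrite /= E LE.
by move=> E2; move: win; rewrite -(gK w) E2 bz; lia.
Qed.

Lemma ncz : nc g z z.
Proof.
rewrite /nc -!(inj_eq val_inj) /= LE z0; apply/andP; split; last by lia.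
by rewrite eq_sym b0.
Qed.

Lemma nc_g x : nc g z x -> nc g z (g x).
Proof.
rewrite /nc => /andP[h1 h2]; apply/andP; split.
  by rewrite (inj_eq ginj).
by apply: contraNneq h1 => E; rewrite -E gK.
Qed.

Lemma prel'_sub x y : prel' g z x y -> prel g x y.
Proof. by case/and3P. Qed.

Lemma prel'_f x y : prel' g z x y -> prel' g z y (g y).
Proof. by case/and3P=> _ _ h; rewrite /prel' prel_f h nc_g. Qed.

Lemma prel'_sym : symmetric (prel' g z).
Proof. by move=> x y; rewrite /prel' (prel_sym m x y); case: (nc g z x); case: (nc g z y); rewrite ?andbT ?andbF. Qed.

Lemma csym' : connect_sym (prel' g z).
Proof. exact: sym_connect_sym prel'_sym. Qed.

Lemma Ag_nc x : Ag x -> nc g z x.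
Proof.
move=> H; apply: (conn_closed (Q := nc g z) _ ncz H).
by move=> u v /and3P[].
Qed.

Lemma Ag_g x : Ag x -> Ag (g x).
Proof.
move=> H; apply: (connect_trans H); apply: connect1.
by rewrite /prel' prel_f (Ag_nc H) (nc_g (Ag_nc H)).
Qed.

Lemma Ag_gE x : Ag (g x) = Ag x.
Proof. by apply/idP/idP => /Ag_g //; rewrite gK. Qed.

Lemma Ag_step x y : Ag x -> prel g x y -> nc g z y -> Ag y.
Proof.
move=> Ax exy ny; apply: (connect_trans Ax); apply: connect1.
by rewrite /prel' exy ny (Ag_nc Ax).
Qed.

Lemma Ag_stepr x y : Ag y -> prel g x y -> nc g z x -> Ag x.
Proof. by move=> Ay exy nx; apply: Ag_step Ay _ nx; rewrite (prel_sym m). Qed.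

Lemma noA_in x a : ~~ Ag x -> nc g z x -> Ag a -> ~~ (lo g x < a < hi g x).
Proof.
move=> nx ncx Aa; apply/negP => ain.
have zout : ~~ (lo g x < z < hi g x) by rewrite z0.
have [w [czw win gwout]] := split_path2_e m prel'_sub prel'_f csym' Aa zout ain.
have Aw : Ag w := czw.
have gwx : g w != x by apply: contraNneq nx => <-; apply: Ag_g.
have gwgx : g w != g x by apply: contraNneq nx => /ginj <-.
have cr := split_cross m win gwout gwx gwgx.
by move/negP: nx; apply; apply: Ag_step Aw _ ncx; rewrite /prel cr.
Qed.

Lemma cross_c x : nc g z x -> prel g x b || prel g x L -> lo g x < b < hi g x.
Proof.
move=> ncx H.
have hx : pcross g x L.
  case/orP: H => /orP[cr|/eqP E].
  - by rewrite pcross_f2 in cr.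
  - by case/andP: ncx => _; rewrite -(ginj E) eqxx.
  - done.
  - by case/andP: ncx; rewrite -E gK eqxx.
move: hx ncx; rewrite /nc /pcross /lo /hi -!(inj_eq val_inj) /= LE.
have := ltn_ord x; have := ltn_ord (g x); lia.
Qed.

Lemma same_side x : ~~ Ag x -> nc g z x -> forall a, Ag a ->
  ((a < x) = (a < b)) /\ ((a < g x) = (a < b)).
Proof.
move=> nx ncx.
have key := @conn_reach _ (prel g) (fun x => ~~ Ag x && nc g z x)
  (fun w => ~~ nc g z w) (fun x => forall a, Ag a -> ((a < x) = (a < b)) /\ ((a < g x) = (a < b))).
apply: (key _ _ _ x L); rewrite ?nx ?ncx ?allc //=; last by rewrite /nc eqxx andbF.
- by move=> u /andP[_ ->].
- move=> u w /andP[nu ncu] euw nw a Aa.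
  have hc : prel g u b || prel g u L.
    move: nw; rewrite /nc negb_and !negbK => /orP[]/eqP <-; by rewrite euw ?orbT.
  have H1 := cross_c ncu hc.
  have H2 := noA_in nu ncu Aa.
  have H3 : a != u by apply: contraNneq nu => <-.
  have H4 : a != g u by apply: contraNneq nu => E; rewrite -Ag_gE -E.
  move: H1 H2 H3 H4; rewrite -!(inj_eq val_inj) /= /lo /hi; lia.
- move=> u w /andP[nu ncu] euw /negPn ncw.
  have nw : ~~ Ag w by apply: contra nu => Aw; apply: Ag_stepr Aw euw ncu.
  split; first by rewrite nw ncw.
  move=> Pw a Aa; have [Pw1 Pw2] := Pw a Aa.
  case/orP: euw => [cr|/eqP E]; last by rewrite -E gK in Pw2; split; [rewrite Pw2 | rewrite E Pw1].
  have H2 := noA_in nu ncu Aa.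
  have H2' := noA_in nw ncw Aa.
  have H3 : a != u by apply: contraNneq nu => <-.
  have H4 : a != g u by apply: contraNneq nu => E; rewrite -Ag_gE -E.
  have H5 : a != w by apply: contraNneq nw => <-.
  have H6 : a != g w by apply: contraNneq nw => E; rewrite -Ag_gE -E.
  move: cr Pw1 Pw2 H2 H2' H3 H4 H5 H6; rewrite -!(inj_eq val_inj) /= /pcross /lo /hi.
  lia.
Qed.


Lemma AgL : ~~ Ag L.
Proof. by apply/negP => /Ag_nc; rewrite /nc eqxx andbF. Qed.

Lemma Agb : ~~ Ag b.
Proof. by apply/negP => /Ag_nc; rewrite /nc eqxx. Qed.

Lemma A_above : exists a, Ag a /\ b < a.
Proof.
have [u [w [Au nw euw]]] := conn_exit (Q := fun p => Ag p) (connect0 _ z) AgL (allc z L).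
have ncw : ~~ nc g z w by apply: contra nw => ncw; apply: Ag_step Au euw ncw.
have hc : prel g u b || prel g u L.
  move: ncw; rewrite /nc negb_and !negbK => /orP[]/eqP E; by rewrite -E euw ?orbT.
have := cross_c (Ag_nc Au) hc; rewrite /lo /hi => H.
case: (leqP u (g u)) => hu.
  by exists (g u); split; [apply: Ag_g | move: H; lia].
by exists u; split => //; move: H; lia.
Qed.

Lemma eP : exists2 E : pts n, (~~ Ag E && (E != L)) & e = E.
Proof. by apply: (max_attain (P := fun p => ~~ Ag p && (p != L)) (i0 := b)); rewrite Agb bL. Qed.

Lemma e_ub (p : pts n) : ~~ Ag p -> p != L -> p <= e.
Proof.
move=> h1 h2; rewrite /en.
by apply: (leq_bigmax_cond (P := fun p => ~~ Ag p && (p != L)) (F := fun p : pts n => (p : nat))); rewrite h1 h2.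
Qed.

Lemma b_le_e : b <= e.
Proof. by apply: e_ub; [apply: Agb | apply: bL]. Qed.

Lemma sideE (a : pts n) : Ag a -> (a < e) = (a < b).
Proof.
move=> Aa; have [E /andP[nE EL] ->] := eP.
case Eb: (E == b); first by rewrite (eqP Eb).
have ncE : nc g z E by rewrite /nc Eb EL.
by case: (same_side nE ncE Aa).
Qed.

Lemma e_lt : e.+2 < N.
Proof.
have [a [Aa ba]] := A_above.
have [E /andP[nE EL] Ee] := eP.
have ea : e <= a by rewrite leqNgt; apply/negP => ae; move: (sideE Aa); rewrite ae => /esym ab; lia.
have aE : a != E by apply: contraNneq nE => <-.
have aL : a != L by case/andP: (Ag_nc Aa).
move: aE aL; rewrite -!(inj_eq val_inj) /= LE -Ee.
have := ltn_ord a; lia.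
Qed.

Lemma qE : (q : nat) = e.+1.
Proof. by rewrite /qpt' val_insubd; have := e_lt; case: ifP => //; lia. Qed.

Lemma noA_mid (a : pts n) : Ag a -> ~~ (b < a <= e).
Proof.
move=> Aa; have [E /andP[nE EL] Ee] := eP.
have aE : a != E by apply: contraNneq nE => <-.
have := sideE Aa; move: aE; rewrite -(inj_eq val_inj) /= -Ee; lia.
Qed.

Definition Lm : pts n := insubd z (N.-2).
Lemma LmE : (Lm : nat) = N.-2.
Proof. by rewrite /Lm val_insubd; case: ifP => //; lia. Qed.

Lemma Lm_e : e < Lm.
Proof. rewrite LmE; have := e_lt; lia. Qed.

Lemma LmL : Lm != L.
Proof. by rewrite -(inj_eq val_inj) /= LmE LE; lia. Qed.

Lemma AgLm : Ag Lm.
Proof.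
apply/negPn/negP => nL; have := e_ub nL LmL; have := Lm_e; lia.
Qed.

Local Notation f := (Psi g z).
Local Notation h := (ins q).

Lemma fE x : f (h x) = h (g x).
Proof. by rewrite /Psi conjE //; apply: insK. Qed.

Lemma f_matching : is_matching f.
Proof. by apply: conj_matching => //; [apply: insK | apply: mvK]. Qed.

Lemma hE x : (h x : nat) = insn N q x.
Proof. exact: insE. Qed.

Lemma hlow (x : pts n) : x <= e -> (h x : nat) = x.
Proof. by move=> H; rewrite hE insn_lt_q // qE. Qed.

Lemma hL : (h L : nat) = q.
Proof. by rewrite hE LE insn_L // qE; have := e_lt; lia. Qed.

Lemma hhigh (x : pts n) : e < x -> x != L -> (h x : nat) = x.+1.
Proof.
move=> H1 H2; rewrite hE insn_ge_q ?qE //.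
by move: H2; rewrite -(inj_eq val_inj) /= LE.
Qed.

Lemma hz : h z = z.
Proof. by apply: val_inj; rewrite /= hlow // z0. Qed.

Lemma transferF x y : x != L -> g x != L -> y != L -> g y != L ->
  prel f (h x) (h y) = prel g x y.
Proof.
move=> h1 h2 h3 h4.
apply: (prel_transfer (H := insn N q) (P := fun p => p != N.-1)) => //.
- exact: can_inj (insK q).
- by move=> p; rewrite hE.
- by apply: insn_mono; apply: ltn_ord.
- by move=> p; rewrite fE.
- by move: h1; rewrite -(inj_eq val_inj) /= LE.
- by move: h2; rewrite -(inj_eq val_inj) /= LE.
- by move: h3; rewrite -(inj_eq val_inj) /= LE.
- by move: h4; rewrite -(inj_eq val_inj) /= LE.
Qed.

Lemma ncL x : nc g z x -> x != L.
Proof. by case/andP. Qed.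

Lemma AgF x : Ag x -> connect (prel f) z (h x).
Proof.
move=> Ax; suff : connect (prel f) (h z) (h x) by rewrite hz.
apply: (@conn_hom_in _ _ (prel' g z) (prel f) h (fun p => Ag p) _ _ z x (connect0 _ z) Ax).
  by move=> u v euv Au; apply: (connect_trans Au); apply: connect1.
move=> u v Au /and3P[euv ncu ncv]; apply: connect1.
by rewrite transferF ?ncL ?nc_g.
Qed.

Lemma hA (p : pts n) : Ag p -> ((p < b) && ((h p : nat) == p)) || ((e < p) && ((h p : nat) == p.+1)).
Proof.
move=> Ap; have := noA_mid Ap.
have pb : p != b by case/andP: (Ag_nc Ap).
have pL : p != L by case/andP: (Ag_nc Ap).
case: (leqP p e) => pe.
  rewrite (hlow pe) eqxx; move: pb; rewrite -(inj_eq val_inj) /=; lia.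
by rewrite (hhigh pe pL) eqxx; lia.
Qed.

Lemma closF u v : prel f u v -> Ag (mv q u) -> Ag (mv q v).
Proof.
move=> euv Ax; rewrite -[u](mvK q) -[v](mvK q) in euv.
set x := mv q u in Ax euv *; set y := mv q v in euv *.
have ncx := Ag_nc Ax; have ncgx := nc_g ncx.
case ncy: (nc g z y).
  rewrite transferF ?ncL ?nc_g ?ncy // in euv.
  exact: Ag_step Ax euv ncy.
exfalso.
case/orP: euv => [cr|/eqP E].
  have cr2 : pcross f (h x) (h L).
    move/negbT: ncy; rewrite /nc negb_and !negbK => /orP[]/eqP E; last by rewrite -E.
    by rewrite E -fE pcross_f2 // in cr; apply: f_matching.
  have Hx := hA Ax; have Hgx := hA (Ag_g Ax).
  have := b_le_e.
  move: cr2; rewrite /pcross /lo /hi !fE hL (hlow b_le_e) qE.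
  move: Hx Hgx; lia.
rewrite fE in E; move/(can_inj (insK q)): E => E.
by move: ncy; rewrite -E nc_g.
Qed.

Lemma Rconn x : ~~ Ag x -> nc g z x -> connect (prel f) (h x) (h b).
Proof.
move=> nx ncx.
have key := @conn_reach _ (prel g) (fun x => ~~ Ag x && nc g z x)
  (fun w => ~~ nc g z w) (fun x => connect (prel f) (h x) (h b)).
apply: (key _ _ _ x L); rewrite ?nx ?ncx ?allc //=; last by rewrite /nc eqxx andbF.
- by move=> u /andP[_ ->].
- move=> u w /andP[nu ncu] euw nw; apply: connect1.
  have hc : prel g u b || prel g u L.
    move: nw; rewrite /nc negb_and !negbK => /orP[]/eqP E; by rewrite -E euw ?orbT.
  have H1 := cross_c ncu hc.
  have ngu : ~~ Ag (g u) by rewrite Ag_gE.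
  have u1 := e_ub nu (ncL ncu); have u2 := e_ub ngu (ncL (nc_g ncu)).
  rewrite /prel; apply/orP; left.
  move: H1; rewrite /pcross /lo /hi !fE gK hL qE !hlow ?b_le_e //.
  have := b_le_e; lia.
- move=> u w /andP[nu ncu] euw /negPn ncw.
  have nw : ~~ Ag w by apply: contra nu => Aw; apply: Ag_stepr Aw euw ncu.
  split; first by rewrite nw ncw.
  move=> Pw; apply: connect_trans Pw; apply: connect1.
  by rewrite transferF ?ncL ?nc_g.
Qed.

Lemma f_sep : ~~ connect (prel f) z (h L).
Proof.
apply/negP => H.
have Qz : Ag (mv q z) by rewrite -[X in mv q X]hz insK connect0.
have := conn_closed closF Qz H; rewrite insK.
by apply/negP; apply: AgL.
Qed.

Lemma f_ncomp2 : ncomp f == 2.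
Proof.
have fm := f_matching.
apply/(ncomp2P fm); exists z, (h L); split; first exact: f_sep.
move=> u; rewrite -[u](mvK q); set x := mv q u.
case Ax: (Ag x); first by left; rewrite (csym fm); apply: AgF.
right.
have edge : prel f (h b) (h L) by rewrite /prel fE gK eqxx orbT.
case xL: (x == L); first by rewrite (eqP xL) connect0.
case xb: (x == b); first by rewrite (eqP xb); apply: connect1.
have ncx : nc g z x by rewrite /nc xL xb.
by apply: connect_trans (Rconn (negbT Ax) ncx) (connect1 edge).
Qed.

Lemma f_indec : indecomposable f.
Proof.
have fm := f_matching.
apply/forallP => k; apply/implyP => k0; apply/negP => /forallP H.
have hLm : (h Lm : nat) = N.-1 by rewrite hhigh ?Lm_e ?LmL // LmE; lia.
have kn := ltn_ord k.
have Lin : k.*2.-1 < h Lm < N by rewrite hLm; lia.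
have zout : ~~ (k.*2.-1 < z < N) by rewrite z0.
have cLz : connect (prel f) (h Lm) z by rewrite (csym fm); apply: AgF; apply: AgLm.
have [w [_ win fwout]] := split_path fm cLz Lin zout.
have fw : f w < k.*2 by move: fwout; have := ltn_ord (f w); lia.
move/implyP: (H (f w)) => /(_ fw); rewrite mfK //; move: win; lia.
Qed.

Lemma Psi_I2 : indec2_pred f.
Proof. by rewrite /indec2_pred f_matching f_indec f_ncomp2. Qed.

Lemma qn_Psi : qn f z = e.+1.
Proof.
apply/eqP; rewrite eqn_leq; apply/andP; split.
  apply/bigmax_leqP => p np.
  rewrite -[p](mvK q); set x := mv q p.
  case Ax: (Ag x); first by rewrite -[p](mvK q) AgF in np.
  case xL: (x == L); first by rewrite (eqP xL) hL qE.
  have := e_ub (negbT Ax) (negbT xL) => xe.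
  by rewrite hlow //; lia.
rewrite -qE -hL /qn.
apply: leq_bigmax_cond; exact: f_sep.
Qed.

Lemma Phi_Psi : Phi f z = g.
Proof.
rewrite /Phi; have -> : qpt f z = q by rewrite /qpt /qpt' qn_Psi.
by rewrite conjK //; [apply: insK | apply: mvK].
Qed.

End Psi.

Section Bij.
Variable n : nat.
Hypothesis n2 : 2 <= n.

Let zp : 0 < n.*2. Proof. lia. Qed.
Let z : pts n := Ordinal zp.
Let z0 : (z : nat) = 0. Proof. by []. Qed.

Lemma Psi_s_proof (s : {f : {ffun pts n -> pts n} | conn_diag_pred f}) :
  indec2_pred (Psi (val s) z).
Proof. by case: s => f /= /andP[m c1]; apply: Psi_I2. Qed.

Lemma Phi_s_proof (s : {f : {ffun pts n -> pts n} | indec2_pred f}) :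
  conn_diag_pred (Phi (val s) z).
Proof.
case: s => f /= /and3P[m ind c2].
by rewrite /conn_diag_pred g_matching // /connected_diag Phi_conn.
Qed.

Definition Psi_s (s : {f : {ffun pts n -> pts n} | conn_diag_pred f}) : {f : {ffun pts n -> pts n} | indec2_pred f} := exist _ (Psi (val s) z) (Psi_s_proof s).
Definition Phi_s (s : {f : {ffun pts n -> pts n} | indec2_pred f}) : {f : {ffun pts n -> pts n} | conn_diag_pred f} := exist _ (Phi (val s) z) (Phi_s_proof s).

Lemma bij_Psi : bijective Psi_s.
Proof.
exists Phi_s.
  case=> f Hf; apply: val_inj => /=; case/andP: (Hf) => m c1.
  by apply: Phi_Psi.
case=> f Hf; apply: val_inj => /=; case/and3P: (Hf) => m ind c2.
by apply: Psi_Phi.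
Qed.

End Bij.

Lemma part1 (n : nat) : 2 <= n ->
  exists g : {f : {ffun pts n -> pts n} | conn_diag_pred f} ->
             {f : {ffun pts n -> pts n} | indec2_pred f},
    bijective g.
Proof. by move=> n2; exists (Psi_s n2); apply: bij_Psi. Qed.
Lemma coef_eq (n : nat) : 2 <= n -> I2_coef n = C_coef n.
Proof.
move=> n2; have := bij_eq_card (bij_Psi n2).
rewrite !card_sig => E.
rewrite /I2_coef /C_coef !cardsE.
exact: (esym E).
Qed.

Lemma ncomp0 (f : {ffun pts 0 -> pts 0}) : ncomp f = 0.
Proof.
rewrite ncompE; apply/eqP; rewrite cards_eq0; apply/eqP/setP => X.
rewrite in_set0; apply/negP; rewrite inE => /andP[_ /chords_ch [[i hi] _]].
by [].
Qed.

Lemma C0 : C_coef 0 = 0.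
Proof.
rewrite /C_coef; apply/eqP; rewrite cards_eq0; apply/eqP/setP => f.
by rewrite !inE /conn_diag_pred /connected_diag ncomp0 andbF.
Qed.

Lemma I20 : I2_coef 0 = 0.
Proof.
rewrite /I2_coef; apply/eqP; rewrite cards_eq0; apply/eqP/setP => f.
by rewrite !inE /indec2_pred ncomp0 !andbF.
Qed.

Lemma m1 (f : {ffun pts 1 -> pts 1}) : is_matching f -> forall i, f i = rev_ord i.
Proof.
move=> m i; apply: val_inj => /=; have := mfN m i; rewrite -(inj_eq val_inj) /=.
have := ltn_ord (f i); have := ltn_ord i; rewrite /=; lia.
Qed.

Lemma I21 : I2_coef 1 = 0.
Proof.
rewrite /I2_coef; apply/eqP; rewrite cards_eq0; apply/eqP/setP => f.
rewrite !inE /indec2_pred; apply/negP => /and3P[m _ c2].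
have chs : chords f \subset [set setT].
  apply/subsetP => X /chords_ch [i ->]; rewrite inE; apply/eqP/setP => y.
  rewrite !inE (m1 m) -!(inj_eq val_inj) /=.
  have := ltn_ord y; have := ltn_ord i; rewrite /=; lia.
have : ncomp f <= 1.
  rewrite ncompE; apply: leq_trans (subset_leq_card _) _; last first.
    by apply: leq_trans (subset_leq_card chs) _; rewrite cards1.
  by apply/subsetP => X; rewrite inE => /andP[].
by rewrite (eqP c2).
Qed.

Definition R1 : {ffun pts 1 -> pts 1} := [ffun i => rev_ord i].

Lemma R1m : is_matching R1.
Proof.
apply/forallP => i; rewrite !ffunE rev_ordK eqxx /= -(inj_eq val_inj) /=.
have := ltn_ord i; rewrite /=; lia.
Qed.

Lemma C1 : C_coef 1 = 1.
Proof.
rewrite /C_coef; apply/eqP/cards1P; exists R1; apply/setP => f; rewrite !inE.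
apply/idP/eqP.
  case/andP => m _; apply/ffunP => i; by rewrite (m1 m) ffunE.
move=> ->; rewrite /conn_diag_pred R1m /connected_diag.
have i0 : 0 < 1.*2 by [].
rewrite (ncomp1P (Ordinal i0) R1m); apply/forallP => x; apply/forallP => y.
case xy: (x == y); first by rewrite (eqP xy) connect0.
apply: connect1; rewrite /prel ffunE; apply/orP; right.
move: xy; rewrite -!(inj_eq val_inj) /=.
have := ltn_ord y; have := ltn_ord x; rewrite /=; lia.
Qed.

Theorem lemma3p6p1 :
  (forall n : nat, (2 <= n)%N ->
     exists g : {f : {ffun pts n -> pts n} | conn_diag_pred f} ->
                {f : {ffun pts n -> pts n} | indec2_pred f},
       bijective g)
  /\
  (forall n : nat,
     ((I2_coef n)%:Z = (C_coef n)%:Z - (n == 1%N)%:Z)%R).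
Proof.
split; first exact: part1.
case=> [|[|n]].
- by rewrite I20 C0.
- by rewrite I21 C1 GRing.subrr.
- by rewrite coef_eq // GRing.subr0.
Qed.
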